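(* For all natural numbers $m$ and $n$, every vertex of the polytope $\operatorname{Hom}(\Box_m,\triangle_n)$ has rank $0$ or $1$; that is, $$\operatorname{vert}(\Box_m,\triangle_n)=\operatorname{vert}^{(0)}(\Box_m,\triangle_n)\cup\operatorname{vert}^{(1)}(\Box_m,\triangle_n).$$
   Context: For convex polytopes $P,Q$ (in real finite-dimensional vector spaces), $\operatorname{Hom}(P,Q)$ denotes the set of maps $P\to Q$ that are restrictions of affine maps $\operatorname{Aff}(P)\to\operatorname{Aff}(Q)$ between the affine hulls; viewed as a subset of the real affine space of all affine maps $\operatorname{Aff}(P)\to\operatorname{Aff}(Q)$, it is a convex polytope. $\operatorname{vert}(P,Q)$ denotes its set of vertices (called vertex maps). The rank of $f\in\operatorname{Hom}(P,Q)$ is $\dim\operatorname{Aff}(f(P))$, and $\operatorname{vert}^{(k)}(P,Q)$ is the set of vertex maps of rank $k$. $\triangle_n=\operatorname{conv}(0,e_1,\ldots,e_n)\subset\mathbb{R}^n$ and $\Box_m=\operatorname{conv}\{(a_1,\ldots,a_m): a_i=\pm1\}\subset\mathbb{R}^m$, where $e_i$ are standard basis vectors. *)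

(* Defs.v *)
From HB Require Import structures.
From mathcomp Require Import all_boot all_order all_algebra.
From mathcomp Require Import reals.
Set Implicit Arguments. Unset Strict Implicit. Unset Printing Implicit Defensive.
Import Order.TTheory GRing.Theory Num.Theory.
Local Open Scope ring_scope.

Definition conv_pts (R : realType) (k : nat) (I : finType) (p : I -> 'rV[R]_k)
  (x : 'rV[R]_k) : Prop :=
  exists l : I -> R, (forall i, 0 <= l i) /\ \sum_i l i = 1 /\ x = \sum_i l i *: p i.

Definition cube_vert (R : realType) (m : nat) (s : {ffun 'I_m -> bool}) : 'rV[R]_m :=
  \row_j (if s j then 1 else -1).
Definition cube (R : realType) (m : nat) : 'rV[R]_m -> Prop :=
  conv_pts (@cube_vert R m).

Definition simplex_vert (R : realType) (n : nat) (o : option 'I_n) : 'rV[R]_n :=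
  match o with None => 0 | Some i => \row_j (i == j)%:R end.
Definition simplex (R : realType) (n : nat) : 'rV[R]_n -> Prop :=
  conv_pts (@simplex_vert R n).

(* Affine maps R^m -> R^n (affine hulls of Box_m and Delta_n), as pairs (A, b),
   acting by x |-> x *m A + b. The affine structure on affine maps is the
   componentwise one on pairs. *)
Definition affmap (R : realType) (m n : nat) := ('M[R]_(m, n) * 'rV[R]_n)%type.
Definition aff_app (R : realType) (m n : nat) (f : affmap R m n) (x : 'rV[R]_m)
  : 'rV[R]_n := x *m f.1 + f.2.

Definition Hom_cube_simplex (R : realType) (m n : nat) (f : affmap R m n) : Prop :=
  forall x, cube x -> simplex (aff_app f x).

Definition is_vertex (R : realType) (m n : nat) (P : affmap R m n -> Prop)
  (f : affmap R m n) : Prop :=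
  P f /\ forall (g h : affmap R m n) (t : R), P g -> P h -> 0 < t < 1 ->
    f.1 = t *: g.1 + (1 - t) *: h.1 -> f.2 = t *: g.2 + (1 - t) *: h.2 -> g = h.

Definition aff_indep (R : realType) (n k : nat) (p : 'I_k.+1 -> 'rV[R]_n) : bool :=
  row_free (\matrix_(i < k) (p (lift ord0 i) - p ord0)).

Definition aff_dim_eq (R : realType) (n : nat) (S : 'rV[R]_n -> Prop) (k : nat) : Prop :=
  (exists p : 'I_k.+1 -> 'rV[R]_n, (forall i, S (p i)) /\ aff_indep p) /\
  ~ (exists p : 'I_k.+2 -> 'rV[R]_n, (forall i, S (p i)) /\ aff_indep p).

Definition hom_rank_eq (R : realType) (m n : nat) (f : affmap R m n) (k : nat) : Prop :=
  aff_dim_eq (fun y => exists x, cube x /\ y = aff_app f x) k.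

(* Main.v *)
Require Import Defs.
From HB Require Import structures.
From mathcomp Require Import all_boot all_order all_algebra.
From mathcomp Require Import reals.
From Stdlib Require Import Classical.
From mathcomp Require Import ring lra.
Set Implicit Arguments. Unset Strict Implicit. Unset Printing Implicit Defensive.
Import Order.TTheory GRing.Theory Num.Theory.
Local Open Scope ring_scope.

Lemma sum_opt (R : realType) (I : finType) (F : option I -> R) :
  \sum_o F o = F None + \sum_i F (Some i).
Proof.
rewrite (bigD1 None) //=; congr (_ + _).
rewrite (reindex_omap Some id).
  by apply: eq_bigl => i; rewrite eqxx.
by case.
Qed.

Lemma sum_ind (R : realType) (I : finType) (i0 : I) (F : I -> R) :
  \sum_i (i == i0)%:R * F i = F i0.
Proof.
rewrite (bigD1 i0) //= eqxx mul1r big1 ?addr0 // => i /negbTE ->.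
by rewrite mul0r.
Qed.

Lemma simplexP (R : realType) n (y : 'rV[R]_n) :
  simplex y <-> (forall j, 0 <= y 0 j) /\ \sum_j y 0 j <= 1.
Proof.
split.
  case=> l [l0 [l1 ->]]; split.
    move=> j; rewrite summxE; apply: sumr_ge0 => o _; rewrite mxE.
    apply: mulr_ge0 => //; case: o => [i|]; rewrite ?mxE //.
  rewrite (eq_bigr (fun j : 'I_n => \sum_o l o * @simplex_vert R n o 0 j)); last first.
    by move=> j _; rewrite summxE; apply: eq_bigr => o _; rewrite mxE.
  rewrite exchange_big /= -l1; apply: ler_sum => o _.
  rewrite -mulr_sumr; apply: ler_piMr => //.
  case: o => [i|] /=; last by rewrite big1 // => j _; rewrite mxE.
  rewrite (eq_bigr (fun j => (j == i)%:R * 1)) ?sum_ind //.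
  by move=> j _; rewrite mxE mulr1 eq_sym.
case=> y0 y1.
exists (fun o => match o with None => 1 - \sum_j y 0 j | Some i => y 0 i end).
split; first by case=> // ; rewrite subr_ge0.
split; first by rewrite sum_opt /= subrK.
apply/rowP => j; rewrite summxE sum_opt !mxE mulr0 add0r.
rewrite (eq_bigr (fun i => (i == j)%:R * y 0 i)) ?sum_ind //.
by move=> i _; rewrite !mxE mulrC.
Qed.

Lemma conv_pts_vert (R : realType) k (I : finType) (p : I -> 'rV[R]_k) i :
  conv_pts p (p i).
Proof.
exists (fun i' => (i' == i)%:R); split; first by move=> i'; apply: ler0n.
split.
  rewrite (eq_bigr (fun i' => (i' == i)%:R * 1)) ?sum_ind //.
  by move=> *; rewrite mulr1.
rewrite (bigD1 i) //= eqxx scale1r big1 ?addr0 // => i' /negbTE ->.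
by rewrite scale0r.
Qed.

Lemma cube_bound (R : realType) m (x : 'rV[R]_m) :
  cube x -> forall i, -1 <= x 0 i <= 1.
Proof.
case=> l [l0 [l1 ->]] i; rewrite summxE.
have h : forall s, -1 <= @cube_vert R m s 0 i <= 1.
  by move=> s; rewrite mxE; case: (s i); apply/andP; split; lra.
apply/andP; split.
  rewrite -l1 -sumrN; apply: ler_sum => s _; rewrite mxE.
  have /andP[h1 h2] := h s; have := l0 s; nra.
rewrite -l1; apply: ler_sum => s _; rewrite mxE.
have /andP[h1 h2] := h s; have := l0 s; nra.
Qed.

Lemma mul_lb (R : realType) (x a : R) : -1 <= x <= 1 -> - `|a| <= x * a.
Proof.
case/andP=> h1 h2; have [a0|a0] := lerP 0 a.
  by rewrite ger0_norm //; nra.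
by rewrite ltr0_norm //; nra.
Qed.

Lemma mul_ub (R : realType) (x a : R) : -1 <= x <= 1 -> x * a <= `|a|.
Proof.
case/andP=> h1 h2; have [a0|a0] := lerP 0 a.
  by rewrite ger0_norm //; nra.
by rewrite ltr0_norm //; nra.
Qed.

Definition Pcond (R : realType) m n (A : 'M[R]_(m, n)) (b : 'rV[R]_n) :=
  (forall j, \sum_i `|A i j| <= b 0 j) /\
  \sum_j b 0 j + \sum_i `|\sum_j A i j| <= 1.

Lemma app_entry (R : realType) m n (f : affmap R m n) x j :
  aff_app f x 0 j = \sum_i x 0 i * f.1 i j + f.2 0 j.
Proof. by rewrite /aff_app !mxE. Qed.

Lemma app_sum (R : realType) m n (f : affmap R m n) x :
  \sum_j aff_app f x 0 j = \sum_i x 0 i * (\sum_j f.1 i j) + \sum_j f.2 0 j.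
Proof.
rewrite (eq_bigr _ (fun j _ => app_entry f x j)) big_split /=; congr (_ + _).
by rewrite exchange_big; apply: eq_bigr => i _; rewrite mulr_sumr.
Qed.

Lemma HomP (R : realType) m n (f : affmap R m n) :
  Hom_cube_simplex f <-> Pcond f.1 f.2.
Proof.
split.
  move=> H; split.
    move=> j.
    have /simplexP [h _] := H _ (conv_pts_vert (@cube_vert R m) [ffun i => f.1 i j < 0]).
    have := h j; rewrite app_entry.
    suff -> : \sum_i @cube_vert R m [ffun i => f.1 i j < 0] 0 i * f.1 i j
              = - \sum_i `|f.1 i j| by rewrite addrC subr_ge0.
    rewrite -sumrN; apply: eq_bigr => i _; rewrite !mxE ffunE.
    case: ltrP => a0; first by rewrite ltr0_norm // mul1r opprK.
    by rewrite ger0_norm // mulN1r.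
  have /simplexP [_ h] := H _ (conv_pts_vert (@cube_vert R m) [ffun i => 0 <= \sum_j f.1 i j]).
  move: h; rewrite app_sum addrC.
  suff -> : \sum_i @cube_vert R m [ffun i => 0 <= \sum_j f.1 i j] 0 i * (\sum_j f.1 i j)
              = \sum_i `|\sum_j f.1 i j| by [].
  apply: eq_bigr => i _; rewrite !mxE ffunE.
  case: lerP => a0; first by rewrite ger0_norm // mul1r.
  by rewrite ltr0_norm // mulN1r.
case=> H1 H2 x /cube_bound xb; apply/simplexP; split.
  move=> j; rewrite app_entry.
  have := H1 j.
  have : - \sum_i `|f.1 i j| <= \sum_i x 0 i * f.1 i j.
    rewrite -sumrN; apply: ler_sum => i _; exact: mul_lb.
  lra.
rewrite app_sum.
have : \sum_i x 0 i * (\sum_j f.1 i j) <= \sum_i `|\sum_j f.1 i j|.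
  apply: ler_sum => i _; exact: mul_ub.
lra.
Qed.

Section Pert.
Variables (R : realType) (m n : nat) (A : 'M[R]_(m, n)) (b : 'rV[R]_n).
Variables (i1 i2 : 'I_m) (e p q : R).
Hypothesis i12 : i1 != i2.
Hypothesis ep0 : 0 <= e * p.
Hypothesis eq0 : 0 <= e * q.
Hypothesis epq : e * p + e * q = 1.

Definition dlt (i : 'I_m) : R := (i == i1)%:R * (e * q) - (i == i2)%:R * (e * p).

Lemma sum_dlt (F : 'I_m -> R) : \sum_i dlt i * F i = e * q * F i1 - e * p * F i2.
Proof.
rewrite /dlt (eq_bigr (fun i => (i == i1)%:R * (e * q * F i) - (i == i2)%:R * (e * p * F i))).
  by rewrite sumrB !sum_ind.
by move=> i _; rewrite mulrBl !mulrA.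
Qed.

Lemma w_ge0 (s : R) i : -1 <= s <= 1 -> 0 <= 1 + s * dlt i.
Proof.
case/andP=> s1 s2; rewrite /dlt.
move: ep0 eq0 epq; set a := e * p; set c := e * q => a0 c0 ac.
have h1 : 0 <= 1 + s * c by nra.
have h2 : 0 <= 1 - s * a by nra.
have [->|ni1] := eqVneq i i1.
  by rewrite ?eqxx (negbTE i12) /= mul1r mul0r subr0.
rewrite ?(negbTE ni1) mul0r sub0r.
case: (i == i2); rewrite /= ?mul1r ?mul0r ?oppr0 ?mulr0 ?addr0 //; lra.
Qed.

Lemma sum_w (s : R) (H : 'I_m -> R) :
  \sum_i (1 + s * dlt i) * H i = \sum_i H i + s * (e * q * H i1 - e * p * H i2).
Proof.
rewrite -sum_dlt mulr_sumr -big_split /=; apply: eq_bigr => i _; ring.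
Qed.

Definition pA (s : R) : 'M[R]_(m, n) := \matrix_(i, j) ((1 + s * dlt i) * A i j).
Definition pb (s : R) : 'rV[R]_n :=
  \row_j (b 0 j + s * (e * q * `|A i1 j| - e * p * `|A i2 j|)).

Hypothesis pdef : p = \sum_j `|A i1 j| + `|\sum_j A i1 j|.
Hypothesis qdef : q = \sum_j `|A i2 j| + `|\sum_j A i2 j|.

Lemma pert_P (s : R) : -1 <= s <= 1 -> Pcond A b -> Pcond (pA s) (pb s).
Proof.
move=> sb [H1 H2]; split.
  move=> j; rewrite mxE.
  rewrite (eq_bigr (fun i => (1 + s * dlt i) * `|A i j|)); last first.
    by move=> i _; rewrite mxE normrM ger0_norm // w_ge0.
  by rewrite sum_w lerD2r.
rewrite (eq_bigr (fun j => b 0 j + s * (e * q * `|A i1 j| - e * p * `|A i2 j|)));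
  last by move=> j _; rewrite mxE.
rewrite (eq_bigr (fun i => (1 + s * dlt i) * `|\sum_j A i j|)); last first.
  move=> i _; rewrite (eq_bigr (fun j => (1 + s * dlt i) * A i j)); last first.
    by move=> j _; rewrite mxE.
  by rewrite -mulr_sumr normrM ger0_norm // w_ge0.
rewrite sum_w big_split /= -mulr_sumr sumrB -!mulr_sumr.
suff : s * (e * q * \sum_j `|A i1 j| - e * p * \sum_j `|A i2 j|) +
   s * (e * q * `|\sum_j A i1 j| - e * p * `|\sum_j A i2 j|) = 0 by lra.
rewrite -mulrDr.
suff -> : e * q * \sum_j `|A i1 j| - e * p * \sum_j `|A i2 j| +
  (e * q * `|\sum_j A i1 j| - e * p * `|\sum_j A i2 j|) = 0 by rewrite mulr0.
have -> : e * q * \sum_j `|A i1 j| - e * p * \sum_j `|A i2 j| +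
  (e * q * `|\sum_j A i1 j| - e * p * `|\sum_j A i2 j|) =
  e * q * (\sum_j `|A i1 j| + `|\sum_j A i1 j|) - e * p * (\sum_j `|A i2 j| + `|\sum_j A i2 j|) by ring.
rewrite -pdef -qdef; ring.
Qed.

End Pert.

Lemma sum_norm_pos (R : realType) n (v : 'I_n -> R) j0 : v j0 != 0 -> 0 < \sum_j `|v j|.
Proof.
move=> h; rewrite (bigD1 j0) //=.
have : 0 <= \sum_(j | j != j0) `|v j| by apply: sumr_ge0.
have : 0 < `|v j0| by rewrite normr_gt0.
lra.
Qed.

Lemma rows_zero (R : realType) m n (f : affmap R m n) :
  is_vertex (@Hom_cube_simplex R m n) f ->
  forall i1 i2, i1 != i2 -> (forall j, f.1 i1 j = 0) \/ (forall j, f.1 i2 j = 0).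
Proof.
case: f => A b [Hf Hext] i1 i2 i12 /=.
destruct (classic (forall j, A i1 j = 0)) as [h|h]; first by left.
destruct (classic (forall j, A i2 j = 0)) as [h'|h']; first by right.
exfalso.
have [j1 hj1] := not_all_ex_not _ _ h.
have [j2 hj2] := not_all_ex_not _ _ h'.
set p := \sum_j `|A i1 j| + `|\sum_j A i1 j|.
set q := \sum_j `|A i2 j| + `|\sum_j A i2 j|.
have p0 : 0 < p.
  have := sum_norm_pos (v := fun j => A i1 j) (j0 := j1) (introN eqP hj1).
  have := normr_ge0 (\sum_j A i1 j); rewrite /p; lra.
have q0 : 0 < q.
  have := sum_norm_pos (v := fun j => A i2 j) (j0 := j2) (introN eqP hj2).
  have := normr_ge0 (\sum_j A i2 j); rewrite /q; lra.
set e := (p + q)^-1.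
have e0 : 0 < e by rewrite /e invr_gt0; lra.
have epq : e * p + e * q = 1 by rewrite -mulrDr mulVf //; lra.
have ep0 : 0 <= e * p by apply: mulr_ge0; lra.
have eq0 : 0 <= e * q by apply: mulr_ge0; lra.
have HP : Pcond A b := (HomP (A, b)).1 Hf.
have HP1 := pert_P i12 ep0 eq0 epq (erefl p) (erefl q) (s := 1) ltac:(apply/andP; split; lra) HP.
have HPm := pert_P i12 ep0 eq0 epq (erefl p) (erefl q) (s := -1) ltac:(apply/andP; split; lra) HP.
have h2 : (2 : R) != 0 by rewrite pnatr_eq0.
have : (pA A i1 i2 e p q 1, pb A b i1 i2 e p q 1) = (pA A i1 i2 e p q (-1), pb A b i1 i2 e p q (-1)).
  apply: (Hext _ _ (2^-1) ((HomP (_, _)).2 HP1) ((HomP (_, _)).2 HPm)).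
- apply/andP; split; first by rewrite invr_gt0; lra.
  rewrite invf_lt1; lra.
- rewrite /=; apply/matrixP => i j; rewrite !mxE; by field.
- rewrite /=; apply/rowP => j; rewrite !mxE; by field.
move/(congr1 (fun M : affmap R m n => M.1 i1 j1)); rewrite !mxE.
rewrite /dlt eqxx (negbTE i12) mul1r mul0r subr0 => H.
have : 2 * (e * q) * A i1 j1 = 0.
  have -> : 2 * (e * q) * A i1 j1 = (1 + 1 * (e * q)) * A i1 j1 - (1 + -1 * (e * q)) * A i1 j1 by ring.
  by rewrite H /=; ring.
move/eqP; rewrite mulf_eq0 => /orP[|/eqP //].
rewrite gt_eqF //; apply: mulr_gt0; first lra.
by apply: mulr_gt0 => //; lra.
Qed.

Lemma no_indep (R : realType) m n (f : affmap R m n) k :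
  (\rank f.1 <= k)%N ->
  ~ (exists p : 'I_k.+2 -> 'rV[R]_n,
      (forall i, (fun y => exists x, cube x /\ y = aff_app f x) (p i)) /\ aff_indep p).
Proof.
move=> rk [p [Hp Hi]].
move: Hi; rewrite /aff_indep -row_leq_rank.
suff : (\rank (\matrix_(i < k.+1) (p (lift ord0 i) - p ord0)) <= k)%N.
  by move=> h1 h2; have := leq_trans h2 h1; rewrite ltnn.
apply: leq_trans rk; apply: mxrankS; apply/row_subP => i; rewrite rowK.
have [x0 [_ ->]] := Hp ord0; have [x1 [_ ->]] := Hp (lift ord0 i).
rewrite /aff_app.
have -> : x1 *m f.1 + f.2 - (x0 *m f.1 + f.2) = (x1 - x0) *m f.1.
  by rewrite mulmxBl opprD addrACA subrr addr0.
exact: submxMl.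
Qed.

Lemma img_vert (R : realType) m n (f : affmap R m n) s :
  (fun y => exists x, cube x /\ y = aff_app f x) (aff_app f (@cube_vert R m s)).
Proof. by exists (@cube_vert R m s); split => //; apply: conv_pts_vert. Qed.

Theorem theorem4p1 (R : realType) (m n : nat) (f : affmap R m n) :
  is_vertex (@Hom_cube_simplex R m n) f ->
  hom_rank_eq f 0 \/ hom_rank_eq f 1.
Proof.
move=> Hv.
destruct (classic (exists i0 j0, f.1 i0 j0 <> 0)) as [[i0 [j0 h0]]|hA].
  right; split.
    pose s0 : {ffun 'I_m -> bool} := [ffun i => i != i0].
    pose s1 : {ffun 'I_m -> bool} := [ffun => true].
    exists (fun i : 'I_2 => aff_app f (@cube_vert R m (if i == ord0 then s0 else s1))).
    split; first by move=> i; apply: img_vert.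
    rewrite /aff_indep -row_leq_rank lt0n mxrank_eq0.
    apply/eqP => /matrixP/(_ 0 j0); rewrite !mxE /=.
    rewrite (bigD1 i0) //= [\sum_(j < m) _](bigD1 i0) //= !mxE !ffunE eqxx /=.
    have E : \sum_(i < m | i != i0) @cube_vert R m s0 0 i * f.1 i j0 = \sum_(i < m | i != i0) @cube_vert R m s1 0 i * f.1 i j0.
      by apply: eq_bigr => i hi; rewrite !mxE !ffunE hi.
    rewrite E => H; apply: h0; move: H; lra.
  apply: no_indep.
  have : (f.1 <= row i0 f.1)%MS.
    apply/row_subP => i.
    have [->|ni] := eqVneq i i0; first exact: submx_refl.
    have [h|h] := rows_zero Hv ni.
      suff -> : row i f.1 = 0 by apply: sub0mx.
      by apply/rowP => j; rewrite !mxE h.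
    by exfalso; apply: h0; apply: h.
  move/mxrankS => h; apply: leq_trans h _; exact: rank_leq_row.
left; split.
  exists (fun _ => aff_app f (@cube_vert R m [ffun => true])); split.
    by move=> i; apply: img_vert.
  by rewrite /aff_indep -row_leq_rank.
apply: no_indep.
have -> : f.1 = 0.
  apply/matrixP => i j; rewrite mxE.
  by apply: NNPP => h; apply: hA; exists i, j.
by rewrite mxrank0.
Qed.
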